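(* Let $1\le k\le n$, $p=c_n^k$, and let $X$ be a real symmetric $n\times n$ matrix with diagonalization $X=Q\Lambda Q^{\intercal}$ ($Q$ orthogonal, $\Lambda$ diagonal). Then for each $i\in[n]$, $$p|_{\{i\}}(X)=X_{ii}\,c_n^{k-1}(\Lambda)-X_i^{\intercal}Q\,\nabla c_n^{k-1}(\Lambda)\,Q^{\intercal}X_i,$$ where $X_i$ is the $i$-th column of $X$.
   Context: $c_n^j(X)=\sum_{S\subseteq[n],|S|=j}\det(X|_S)$ with $X|_S$ the principal submatrix indexed by $S$; $p|_{\{i\}}(X)=\sum_{|S|=k,\,i\in S}\det(X|_S)$. For $f$ a function of an $n\times n$ matrix, $\nabla f$ is the matrix $G$ with $G_{ij}=\frac{\partial f}{\partial X_{ij}}$. *)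

(* Defs.v *)
From HB Require Import structures.
From mathcomp Require Import all_boot all_order all_algebra.
From mathcomp Require Import all_classical all_reals all_analysis.
Set Implicit Arguments. Unset Strict Implicit. Unset Printing Implicit Defensive.
Import Order.TTheory GRing.Theory Num.Theory.
Local Open Scope ring_scope.

Definition princ_sub (R : Type) (n : nat) (X : 'M[R]_n) (S : {set 'I_n})
  : 'M[R]_#|S| := \matrix_(a, b) X (enum_val a) (enum_val b).

Definition elem_c (R : comNzRingType) (n j : nat) (X : 'M[R]_n) : R :=
  \sum_(S : {set 'I_n} | #|S| == j) \det (princ_sub X S).

(* p|_{i}(X) = sum_{|S| = k, i in S} det(X|_S), where p = c_n^k *)
Definition restr_c (R : comNzRingType) (n k : nat) (i : 'I_n) (X : 'M[R]_n) : R :=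
  \sum_(S : {set 'I_n} | (#|S| == k) && (i \in S)) \det (princ_sub X S).

Definition partial_entry (R : realType) (n : nat) (f : 'M[R]_n -> R)
  (X : 'M[R]_n) (i j : 'I_n) : R :=
  derive1 (fun t : R => f (X + t *: delta_mx i j)) 0.

Definition grad (R : realType) (n : nat) (f : 'M[R]_n -> R) (X : 'M[R]_n)
  : 'M[R]_n := \matrix_(i, j) partial_entry f X i j.

(* Main.v *)
Require Import Defs.
From HB Require Import structures.
From mathcomp Require Import all_boot all_order all_algebra.
From mathcomp Require Import all_classical all_reals all_analysis.
From mathcomp Require Import all_fingroup.
Import Order.TTheory GRing.Theory Num.Theory.
Local Open Scope ring_scope.

Section Helpers.
Local Set Implicit Arguments.
Local Unset Strict Implicit.

Definition ext_fun n (S : {set 'I_n}) x0 (h : x0 \in S) (t : 'S_#|S|) (x : 'I_n) : 'I_n :=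
  if x \in S then enum_val (t (enum_rank_in h x)) else x.

Lemma ext_fun_inj n (S : {set 'I_n}) x0 (h : x0 \in S) t : injective (ext_fun h t).
Proof.
move=> x y; rewrite /ext_fun.
case: ifP => hx; case: ifP => hy.
- move/enum_val_inj/perm_inj => e.
  by rewrite -(enum_rankK_in h hx) -(enum_rankK_in h hy) e.
- by move=> e; move: hy; rewrite -e enum_valP.
- by move=> e; move: hx; rewrite e enum_valP.
- by [].
Qed.

Definition ext n (S : {set 'I_n}) x0 (h : x0 \in S) (t : 'S_#|S|) : 'S_n :=
  perm (@ext_fun_inj n S x0 h t).

Lemma extE n (S : {set 'I_n}) x0 (h : x0 \in S) t x : ext h t x = ext_fun h t x.
Proof. by rewrite permE. Qed.

Lemma ext_val n (S : {set 'I_n}) x0 (h : x0 \in S) t a :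
  ext h t (enum_val a) = enum_val (t a).
Proof. by rewrite extE /ext_fun enum_valP enum_valK_in. Qed.

Lemma ext_on n (S : {set 'I_n}) x0 (h : x0 \in S) t : perm_on S (ext h t).
Proof.
apply/fintype.subsetP => x; rewrite inE extE /ext_fun.
by case: ifP => // _; rewrite eqxx.
Qed.

Lemma ext_injective n (S : {set 'I_n}) x0 (h : x0 \in S) : injective (ext h).
Proof.
move=> t1 t2 e; apply/permP => a.
apply: enum_val_inj; by rewrite -(ext_val h t1) -(ext_val h t2) e.
Qed.

Lemma ext_surj n (S : {set 'I_n}) x0 (h : x0 \in S) (s : 'S_n) :
  perm_on S s -> exists t, s = ext h t.
Proof.
move=> hs.
have ginj : injective (fun a : 'I_#|S| => enum_rank_in h (s (enum_val a))).
  move=> a b /= e.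
  have := f_equal enum_val e.
  rewrite !enum_rankK_in ?(perm_closed _ hs) ?enum_valP //.
  by move/perm_inj/enum_val_inj.
exists (perm ginj); apply/permP => x.
rewrite extE /ext_fun; case: ifP => hx.
  by rewrite permE /= enum_rankK_in ?(perm_closed _ hs) ?enum_valP // enum_rankK_in.
by rewrite (out_perm hs) // hx.
Qed.

Lemma ext_mul n (S : {set 'I_n}) x0 (h : x0 \in S) t1 t2 :
  (ext h (t1 * t2) = ext h t1 * ext h t2)%g.
Proof.
apply/permP => x; rewrite permM !extE /ext_fun.
case: ifP => hx; last by rewrite hx.
by rewrite enum_valP enum_valK_in permM.
Qed.

Lemma ext_one n (S : {set 'I_n}) x0 (h : x0 \in S) : ext h 1%g = 1%g.
Proof.
apply/permP => x; rewrite perm1 extE /ext_fun perm1.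
by case: ifP => hx //; rewrite enum_rankK_in.
Qed.

Lemma ext_tperm n (S : {set 'I_n}) x0 (h : x0 \in S) a b :
  ext h (tperm a b) = tperm (enum_val a) (enum_val b).
Proof.
apply/permP => x; rewrite extE /ext_fun.
case: ifP => hx.
  rewrite -{2}(enum_rankK_in h hx) !permE /= !(inj_eq enum_val_inj).
  by case: ifP => //; case: ifP.
rewrite permE /=; case: ifP => [/eqP e|_]; first by move: hx; rewrite e enum_valP.
by case: ifP => [/eqP e|//]; move: hx; rewrite e enum_valP.
Qed.

Lemma ext_odd n (S : {set 'I_n}) x0 (h : x0 \in S) t :
  odd_perm (ext h t) = odd_perm t.
Proof.
have [ts -> _] := prod_tpermP t.
elim: ts => [|[a b] ts IH]; first by rewrite !big_nil ext_one !odd_perm1.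
by rewrite !big_cons ext_mul !odd_permM IH ext_tperm !odd_tperm (inj_eq enum_val_inj).
Qed.

Lemma prod_notin n (S : {set 'I_n}) (s : 'S_n) (R : comNzRingType) :
  \prod_(i | i \notin S) ((i == s i)%:R : R) = (perm_on S s)%:R.
Proof.
case: (boolP (perm_on S s)) => hs.
  by rewrite big1 // => i hi; rewrite (out_perm hs hi) eqxx.
have [x] := fintype.subsetPn hs; rewrite inE => hx hxS.
by rewrite (bigD1 x) //= eq_sym (negbTE hx) mul0r.
Qed.

Lemma sum_perm_on n (S : {set 'I_n}) x0 (h : x0 \in S) (V : nmodType) (F : 'S_n -> V) :
  \sum_(s | perm_on S s) F s = \sum_(t : 'S_#|S|) F (ext h t).
Proof.
transitivity (\sum_(t in [set: 'S_#|S|]) F (ext h t)); last first.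
  by apply: eq_bigl => t; rewrite inE.
rewrite -(big_imset _ (in2W (@ext_injective n S x0 h))) /=.
apply: eq_bigl => s; apply/idP/imsetP.
  by case/(ext_surj h) => t ->; exists t; rewrite ?inE.
by case=> t _ ->; apply: ext_on.
Qed.

Lemma det_princ_sub_set0 (R : comNzRingType) n (M : 'M[R]_n) :
  \det (princ_sub M finset.set0) = 1.
Proof.
move: (princ_sub M finset.set0); rewrite cards0 => A; exact: det_mx00.
Qed.

Lemma KL (R : comNzRingType) n (M : 'M[R]_n) :
  \det (1%:M + M) = \sum_(S : {set 'I_n}) \det (princ_sub M S).
Proof.
transitivity (\sum_(s : 'S_n) \sum_(S : {set 'I_n}) (-1) ^+ s *
   \prod_i (if i \in S then M i (s i) else (i == s i)%:R)).
  apply: eq_bigr => s _; rewrite -mulr_sumr; congr (_ * _).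
  rewrite (eq_bigr (fun i => M i (s i) + (i == s i)%:R)); last first.
    by move=> i _; rewrite !mxE addrC.
  exact: bigA_distr.
rewrite exchange_big; apply: eq_bigr => S _ /=.
transitivity (\sum_(s | perm_on S s) (-1) ^+ s * \prod_(i in S) M i (s i)).
  rewrite [RHS]big_mkcond; apply: eq_bigr => s _.
  rewrite (bigID (fun i => i \in S)) /= mulrC.
  have -> : \prod_(i | i \notin S) (if i \in S then M i (s i) else (i == s i)%:R)
      = (perm_on S s)%:R.
    rewrite -(prod_notin S s R). apply: eq_bigr => i /negbTE ->. done.
  have -> : \prod_(i | i \in S) (if i \in S then M i (s i) else (i == s i)%:R)
      = \prod_(i in S) M i (s i) by apply: eq_bigr => i ->.
  by case: (perm_on S s) => /=; [rewrite mulr1 mulrC | rewrite mulr0 mul0r].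
have [->|[x0 h]] := set_0Vmem S.
  apply: esym; apply: etrans (det_princ_sub_set0 M) _; apply: esym.
  rewrite (bigD1 1%g) ?perm_on1 //= [X in _ + X]big_pred0; last first.
    move=> s; apply/negbTE/negP => /andP [hp hs]; move: hs; rewrite (_ : s = 1%g) ?eqxx //.
    by apply/permP => x; rewrite perm1 (out_perm hp) ?inE.
  by rewrite odd_perm1 big_set0 expr0 mul1r addr0.
rewrite (sum_perm_on h) /determinant; apply: eq_bigr => t _.
rewrite ext_odd; congr (_ * _); rewrite big_enum_val.
by apply: eq_bigr => a _; rewrite ext_val mxE.
Qed.

Definition PhiM (R : comNzRingType) n (M : 'M[R]_n) : 'M[{poly R}]_n :=
  1%:M + 'X *: map_mx polyC M.

Lemma princ_sub_scale (R : comNzRingType) n (M : 'M[R]_n) S :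
  princ_sub ('X *: map_mx polyC M) S = 'X *: map_mx polyC (princ_sub M S).
Proof. by apply/matrixP => a b; rewrite !mxE. Qed.

Lemma Phi_coef (R : comNzRingType) n (M : 'M[R]_n) j :
  (\det (PhiM M))`_j = elem_c j M.
Proof.
rewrite /PhiM KL coef_sum /elem_c [RHS]big_mkcond /=.
apply: eq_bigr => S _.
rewrite princ_sub_scale detZ det_map_mx /= mulrC coefCM coefXn.
by rewrite eq_sym; case: (_ == _); rewrite ?mulr1 ?mulr0.
Qed.

Lemma elem_c0 (R : comNzRingType) n (M : 'M[R]_n) : elem_c 0 M = 1.
Proof.
rewrite /elem_c (big_pred1 finset.set0); first exact: det_princ_sub_set0.
by move=> S; rewrite cards_eq0.
Qed.

Lemma PhiM_det_neq0 (R : idomainType) n (M : 'M[R]_n) : \det (PhiM M) != 0.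
Proof.
apply/negP => /eqP h; have := Phi_coef M 0.
by rewrite h coef0 elem_c0 => /eqP; rewrite eq_sym oner_eq0.
Qed.

Lemma adj_uniq (R : idomainType) n (A B : 'M[R]_n) :
  \det A != 0 -> B *m A = (\det A)%:M -> \adj A = B.
Proof.
move=> dA e.
have e1 : (\adj A - B) *m A = 0 by rewrite mulmxBl mul_adj_mx e subrr.
have : (\adj A - B) *m (A *m \adj A) = 0 by rewrite mulmxA e1 mul0mx.
rewrite mul_mx_adj mul_mx_scalar => /eqP; rewrite scalemx_eq0 (negbTE dA) /=.
by rewrite subr_eq0 => /eqP.
Qed.

Lemma det_delta_update (R : comNzRingType) n (A : 'M[R]_n) s a b :
  \det (A + s *: delta_mx a b) = \det A + s * cofactor A a b.
Proof.
rewrite (expand_det_row _ a) (expand_det_row A a).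
have ec : forall j, cofactor (A + s *: delta_mx a b) a j = cofactor A a j.
  move=> j; rewrite /cofactor; congr (_ * \det _).
  apply/matrixP => u v; rewrite !mxE.
  by rewrite eq_sym (negbTE (neq_lift a u)) /= mulr0 addr0.
under eq_bigr do rewrite ec !mxE eqxx /= mulrDl.
rewrite big_split /=; congr (_ + _).
rewrite (bigD1 b) //= eqxx mulr1 big1 ?addr0 // => j /negbTE ->.
by rewrite mulr0 mul0r.
Qed.

Definition zrow (R : comNzRingType) n (X : 'M[R]_n) i : 'M[R]_n :=
  \matrix_(r, s) if r == i then 0 else X r s.

Lemma princ_zrow_in (R : comNzRingType) n (X : 'M[R]_n) i (S : {set 'I_n}) :
  i \in S -> \det (princ_sub (zrow X i) S) = 0.
Proof.
move=> hi; rewrite (expand_det_row _ (enum_rank_in hi i)) big1 // => j _.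
by rewrite !mxE enum_rankK_in // eqxx mul0r.
Qed.

Lemma princ_zrow_out (R : comNzRingType) n (X : 'M[R]_n) i (S : {set 'I_n}) :
  i \notin S -> princ_sub (zrow X i) S = princ_sub X S.
Proof.
move=> hi; apply/matrixP => a b; rewrite !mxE; case: eqP => // e.
by move: hi; rewrite -e enum_valP.
Qed.

Lemma restr_split (R : comNzRingType) n k (X : 'M[R]_n) i :
  restr_c k i X = elem_c k X - elem_c k (zrow X i).
Proof.
rewrite /elem_c (bigID (fun S : {set 'I_n} => i \in S)) [X in _ - X](bigID (fun S : {set 'I_n} => i \in S)) /=.
rewrite [X in _ - (X + _)]big1 ?add0r; last first.
  by move=> S /andP [_ h]; apply: princ_zrow_in.
rewrite [X in _ - X](eq_bigr (fun S => \det (princ_sub X S))); last first.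
  by move=> S /andP [_ h]; rewrite princ_zrow_out.
by rewrite addrK.
Qed.

Lemma Phi_zrow (R : comNzRingType) n (X : 'M[R]_n) i :
  \det (PhiM (zrow X i)) = \adj (PhiM X) i i.
Proof.
rewrite (expand_det_row _ i) (bigD1 i) //= big1 ?addr0; last first.
  by move=> j hj; rewrite !mxE eqxx eq_sym (negbTE hj) /= mulr0 addr0 mul0r.
rewrite !mxE !eqxx /= mulr0 addr0 mul1r /cofactor; congr (_ * \det _).
apply/matrixP => u v; rewrite !mxE.
by rewrite (_ : (lift i u == i) = false) //; apply/negbTE; rewrite eq_sym; exact: neq_lift.
Qed.

Lemma E1 (R : comNzRingType) n (X : 'M[R]_n) i :
  \adj (PhiM X) i i + 'X * (map_mx polyC X *m \adj (PhiM X)) i i = \det (PhiM X).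
Proof.
have := mul_mx_adj (PhiM X).
rewrite {1}/PhiM mulmxDl mul1mx -scalemxAl => /matrixP /(_ i i).
by rewrite !mxE eqxx mulr1n.
Qed.

Lemma E2 (R : comNzRingType) n (X : 'M[R]_n) i :
  (map_mx polyC X *m \adj (PhiM X)) i i
  + 'X * (map_mx polyC X *m \adj (PhiM X) *m map_mx polyC X) i i
  = \det (PhiM X) * (X i i)%:P.
Proof.
have := congr1 (mulmx (map_mx polyC X)) (mul_adj_mx (PhiM X)).
rewrite {2}/PhiM mulmxDr mulmx1 -scalemxAr mulmxDr -scalemxAr !mulmxA.
rewrite mul_mx_scalar => /matrixP /(_ i i).
by rewrite !mxE mulrC.
Qed.

Lemma PhiM_conj (R : comNzRingType) n (X Q L : 'M[R]_n) :
  Q *m Q^T = 1%:M -> X = Q *m L *m Q^T ->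
  PhiM X = map_mx polyC Q *m PhiM L *m (map_mx polyC Q)^T.
Proof.
move=> hQ hX.
have hQp : map_mx polyC Q *m (map_mx polyC Q)^T = 1%:M.
  by rewrite map_trmx -map_mxM hQ map_mx1.
rewrite /PhiM mulmxDr mulmx1 mulmxDl hQp -scalemxAr -scalemxAl hX.
by rewrite !map_mxM map_trmx.
Qed.

Lemma det_conj (R : comNzRingType) n (Q A : 'M[R]_n) :
  Q *m Q^T = 1%:M -> \det (Q *m A *m Q^T) = \det A.
Proof.
by move=> hQ; rewrite !det_mulmx [_ * \det A]mulrC -mulrA -det_mulmx hQ det1 mulr1.
Qed.

Lemma adj_conj (R : idomainType) n (Q A : 'M[R]_n) :
  Q *m Q^T = 1%:M -> Q^T *m Q = 1%:M -> \det A != 0 ->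
  \adj (Q *m A *m Q^T) = Q *m \adj A *m Q^T.
Proof.
move=> hQ hQ' dA; apply: adj_uniq; first by rewrite det_conj.
rewrite det_conj //.
rewrite !mulmxA -[Q *m _ *m _ *m Q]mulmxA hQ' mulmx1 -[Q *m \adj A *m A]mulmxA.
by rewrite mul_adj_mx mul_mx_scalar -scalemxAl hQ scalemx1.
Qed.

End Helpers.

Definition coefm (R : nzRingType) m p j (A : 'M[{poly R}]_(m,p)) : 'M[R]_(m,p) :=
  \matrix_(a, b) (A a b)`_j.
Arguments coefm {R m p} j A.

Lemma coefmMl (R : comNzRingType) m n p j (C : 'M[R]_(m,n)) (Y : 'M[{poly R}]_(n,p)) :
  C *m coefm j Y = coefm j (map_mx polyC C *m Y).
Proof.
apply/matrixP => a b; rewrite !mxE coef_sum; apply: eq_bigr => c _.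
by rewrite ?mxE coefCM.
Qed.

Lemma coefmMr (R : comNzRingType) m n p j (C : 'M[R]_(n,p)) (Y : 'M[{poly R}]_(m,n)) :
  coefm j Y *m C = coefm j (Y *m map_mx polyC C).
Proof.
apply/matrixP => a b; rewrite !mxE coef_sum; apply: eq_bigr => c _.
by rewrite ?mxE coefMC.
Qed.

Lemma aff_derive (R : realType) (a b : R) : derive1 (fun t : R => a + t * b) 0 = b.
Proof.
rewrite derive1E derive_val.
by rewrite add0r mul1r scaler0 add0r /GRing.scale /= mulr1.
Qed.

Lemma grad_elem (R : realType) n j (L : 'M[R]_n) :
  grad (elem_c j) L = coefm j ('X *: (\adj (PhiM L))^T).
Proof.
apply/matrixP => a b; rewrite !mxE /partial_entry.
set beta := ('X * _)`_j.
have h : forall t : R, elem_c j (L + t *: delta_mx a b) = elem_c j L + t * beta.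
  move=> t; rewrite -!Phi_coef.
  have -> : PhiM (L + t *: delta_mx a b) = PhiM L + ('X * t%:P) *: delta_mx a b.
    by rewrite /PhiM map_mxD map_mxZ map_delta_mx scalerDr addrA scalerA.
  rewrite det_delta_update coefD; congr (_ + _).
  by rewrite /beta mulrC mulrA mulrC coefCM mulrC.
rewrite (_ : (fun t : R => elem_c j (L + t *: delta_mx a b)) =
             (fun t : R => elem_c j L + t * beta)); last by apply/funext => t; rewrite h.
exact: aff_derive.
Qed.

Theorem mainTheorem13 (R : realType) (n k : nat) (X Q L : 'M[R]_n) (i : 'I_n) :
  (1 <= k)%N -> (k <= n)%N ->
  X^T = X ->
  Q *m Q^T = 1%:M -> Q^T *m Q = 1%:M ->
  is_diag_mx L ->
  X = Q *m L *m Q^T ->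
  restr_c k i X =
    X i i * elem_c (k.-1) L
    - (((col i X)^T *m Q *m grad (elem_c (k.-1)) L *m Q^T *m col i X) 0 0).
Proof.
move=> hk _ hXs hQ hQ' _ hX.
set Qp := map_mx polyC Q.
set A := PhiM X; set B := PhiM L; set Xp := map_mx polyC X.
have hQp : Qp *m Qp^T = 1%:M by rewrite map_trmx -map_mxM hQ map_mx1.
have hQp' : Qp^T *m Qp = 1%:M by rewrite map_trmx -map_mxM hQ' map_mx1.
have hA : A = Qp *m B *m Qp^T by exact: PhiM_conj.
have dAB : \det A = \det B by rewrite hA det_conj.
have adjAB : \adj A = Qp *m \adj B *m Qp^T.
  by rewrite hA adj_conj // PhiM_det_neq0.
have cL : elem_c k.-1 L = elem_c k.-1 X by rewrite -!Phi_coef -/A -/B dAB.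
set Z := (Xp *m \adj A *m Xp) i i.
have lhs : restr_c k i X = (\det A)`_k.-1 * X i i - ('X * Z)`_k.-1.
  rewrite restr_split -!Phi_coef Phi_zrow -/A -coefB -{1}(E1 X i) -/A -/Xp.
  rewrite addrAC subrr add0r [LHS]coefXM eqn0Ngt hk /=.
  have := E2 X i; rewrite -/A -/Xp -/Z => e.
  by rewrite (_ : (Xp *m \adj A) i i = \det A * (X i i)%:P - 'X * Z) ?coefB ?coefMC // -e addrK.
rewrite lhs cL -Phi_coef -/A mulrC; congr (_ - _).
rewrite grad_elem.
have hXp : Xp^T = Xp by rewrite /Xp map_trmx hXs.
have hcol : map_mx polyC (col i X) = col i Xp by apply/matrixP => u v; rewrite !mxE.
have e : (col i X)^T *m Q *m coefm k.-1 ('X *: (\adj B)^T) *m Q^T *m col i X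
   = coefm k.-1 ('X *: ((col i Xp)^T *m (\adj A)^T *m col i Xp)).
  rewrite coefmMl !coefmMr; congr (coefm _ _).
  rewrite !map_mxM -!map_trmx hcol -/Qp.
  rewrite -scalemxAr -!scalemxAl; congr (_ *: _).
  by rewrite adjAB !trmx_mul !trmxK !mulmxA.
rewrite e /coefm mxE mxE.
have e2 : (col i Xp)^T *m (\adj A)^T *m col i Xp = ((col i Xp)^T *m \adj A *m col i Xp)^T.
  by rewrite !trmx_mul trmxK mulmxA.
rewrite e2 mxE tr_col hXp -row_mul /Z.
suff -> : (Xp *m \adj A *m Xp) i i = (row i (Xp *m \adj A) *m col i Xp) 0 0 by [].
by rewrite !mxE; apply: eq_bigr => c _; rewrite !mxE.
Qed.
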